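(* Let $\Bbbk$ be an algebraically closed field of characteristic zero, $G$ a finite group, $\chi:G\to\Bbbk^\times$ a linear character, $g\in Z(G)$, $n\geq 2$ the multiplicative order of $\chi(g)$, and $H$ the $\Bbbk$-algebra generated by $\Bbbk G$ and $z$ with relations $z^n=0$, $zs=\chi(s)sz$ ($s\in G$). Suppose $$(z^{l_1}h_1+\cdots+z^{l_t}h_t)=(z^{m_1}a_1+\cdots+z^{m_r}a_r),$$ where $n-1\geq l_1>\cdots>l_t\geq0$, $n-1\geq m_1>\cdots>m_r\geq0$, $h_i,a_j\in\Bbbk G$, $h_t\neq0$ and $a_r\neq0$. Then $l_t=m_r$ and $\langle h_t\rangle=\langle a_r\rangle$.
   Context: $(a)$ denotes the two-sided ideal of $H$ generated by $a$; for $h\in\Bbbk G$, $\langle h\rangle$ denotes the two-sided ideal of $\Bbbk G$ generated by $h$. *)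

(* Defs.v *)
From mathcomp Require Import all_boot all_order all_algebra all_fingroup.
Set Implicit Arguments. Unset Strict Implicit. Unset Printing Implicit Defensive.
Import GRing.Theory.
Local Open Scope ring_scope.

(* The group algebra kG of a finite group gT over a field F:
   an element  sum_s c_s s  is represented by its coefficient function. *)
Definition galg (F : fieldType) (gT : finGroupType) := {ffun gT -> F}.

Definition gbasis (F : fieldType) (gT : finGroupType) (s : gT) : galg F gT :=
  [ffun u => if u == s then 1 else 0].

Definition gmul (F : fieldType) (gT : finGroupType) (a b : galg F gT) : galg F gT :=
  [ffun u => \sum_(s : gT) a s * b (s^-1 * u)%g].

(* twisting automorphism: s |-> chi(s)^(-j) s, so that  a z^j = z^j (gtwist j a) *)
Definition gtwist (F : fieldType) (gT : finGroupType) (chi : gT -> F) (j : nat)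
  (a : galg F gT) : galg F gT := [ffun s => (chi s ^+ j)^-1 * a s].

(* The algebra H generated by kG and z with z^n = 0, z s = chi(s) s z.
   It has kG-basis 1, z, ..., z^(n-1) (H = \oplus_{i<n} z^i kG);
   an element  sum_i z^i h_i  is represented by  i |-> h_i. *)
Definition Halg (F : fieldType) (gT : finGroupType) (n : nat) :=
  {ffun 'I_n -> galg F gT}.

(* the element z^l h of H (equal to 0 when l >= n, as z^n = 0) *)
Definition zmon (F : fieldType) (gT : finGroupType) (n : nat) (l : nat)
  (h : galg F gT) : Halg F gT n :=
  [ffun i : 'I_n => if val i == l then h else 0].

(* multiplication in H : (z^i a)(z^j b) = z^(i+j) (gtwist j a) b *)
Definition Hmul (F : fieldType) (gT : finGroupType) (chi : gT -> F) (n : nat)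
  (x y : Halg F gT n) : Halg F gT n :=
  [ffun k : 'I_n => \sum_(i < n) \sum_(j < n)
      if (val i + val j == val k)%N then gmul (gtwist chi j (x i)) (y j) else 0].

Definition ideal_gen (R : nmodType) (mul : R -> R -> R) (a : R) : R -> Prop :=
  fun x => exists s : seq (R * R), x = \sum_(p <- s) mul (mul p.1 a) p.2.

Definition linear_char (F : fieldType) (gT : finGroupType) (chi : gT -> F) :=
  (forall s t : gT, chi (s * t)%g = chi s * chi t) /\ (forall s, chi s != 0).

(* Main.v *)
Require Import Defs.
From mathcomp Require Import all_boot all_order all_algebra all_fingroup.
Set Implicit Arguments. Unset Strict Implicit. Unset Printing Implicit Defensive.
Import GRing.Theory.
Local Open Scope ring_scope.

Lemma ffun0E (aT : finType) (rT : nmodType) (x : aT) : (0 : {ffun aT -> rT}) x = 0.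
Proof. by rewrite ffunE. Qed.

Section G.
Variables (F : fieldType) (gT : finGroupType).
Implicit Types a b c : galg F gT.

Lemma gmul0r b : gmul 0 b = 0 :> galg F gT.
Proof. apply/ffunP => u; rewrite ffunE ffun0E big1 // => s _; by rewrite ffun0E mul0r. Qed.
Lemma gmulr0 a : gmul a 0 = 0 :> galg F gT.
Proof. apply/ffunP => u; rewrite ffunE ffun0E big1 // => s _; by rewrite ffun0E mulr0. Qed.

Lemma gmul_sumr I (s : seq I) (f : I -> galg F gT) a :
  gmul a (\sum_(i <- s) f i) = \sum_(i <- s) gmul a (f i).
Proof.
apply/ffunP => u; rewrite ffunE sum_ffunE.
under eq_bigr => x _ do rewrite sum_ffunE mulr_sumr.
rewrite exchange_big; apply: eq_bigr => i _; by rewrite ffunE.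
Qed.

Lemma gmul_suml I (s : seq I) (f : I -> galg F gT) b :
  gmul (\sum_(i <- s) f i) b = \sum_(i <- s) gmul (f i) b.
Proof.
apply/ffunP => u; rewrite ffunE sum_ffunE.
under eq_bigr => x _ do rewrite sum_ffunE mulr_suml.
rewrite exchange_big; apply: eq_bigr => i _; by rewrite ffunE.
Qed.

Lemma gmulA a b c : gmul (gmul a b) c = gmul a (gmul b c).
Proof.
apply/ffunP => u; rewrite !ffunE.
under eq_bigr => s _ do rewrite ffunE mulr_suml.
rewrite exchange_big; apply: eq_bigr => x _; rewrite ffunE mulr_sumr.
rewrite (reindex_inj (mulgI x)); apply: eq_bigr => y _.
by rewrite mulKg invMg mulgA mulrA.
Qed.

Lemma ideal_trans (h a y : galg F gT) :
  ideal_gen (@gmul F gT) h y -> ideal_gen (@gmul F gT) a h ->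
  ideal_gen (@gmul F gT) a y.
Proof.
move=> [s ->] [s' ->].
exists [seq (gmul p.1 q.1, gmul q.2 p.2) | p <- s, q <- s'].
rewrite big_allpairs_dep; apply: eq_bigr => p _.
rewrite gmul_sumr gmul_suml; apply: eq_bigr => q _ /=.
by rewrite !gmulA.
Qed.

End G.

Section H.
Variables (F : fieldType) (gT : finGroupType) (chi : gT -> F) (n : nat).
Local Notation HH := (Halg F gT n.+1).
Local Notation hmul := (Hmul chi (n:=n.+1)).

Lemma gtwist0 j : gtwist chi j 0 = 0.
Proof. apply/ffunP => s; by rewrite ffunE !ffun0E mulr0. Qed.
Lemma gtwist_0 a : gtwist chi 0 a = a.
Proof. apply/ffunP => s; by rewrite ffunE expr0 invr1 mul1r. Qed.

Lemma hmul_left (u x : HH) (L : 'I_n.+1) :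
  (forall k : 'I_n.+1, (k < L)%N -> x k = 0) ->
  (forall k : 'I_n.+1, (k < L)%N -> hmul u x k = 0) /\
  hmul u x L = gmul (gtwist chi L (u ord0)) (x L).
Proof.
move=> hx; split.
  move=> k hk; rewrite ffunE big1 // => i _; rewrite big1 // => j _.
  case: eqP => // e; rewrite hx ?gmulr0 //.
  by apply: leq_ltn_trans hk; rewrite -e leq_addl.
rewrite ffunE (bigD1 ord0) //= [X in _ + X]big1 ?addr0.
  rewrite (bigD1 L) //= ?add0n eqxx [X in _ + X]big1 ?addr0 // => j hj.
  by rewrite ?add0n; case: eqP => // /val_inj e; rewrite e eqxx in hj.
move=> i hi; rewrite big1 // => j _; case: eqP => // e.
rewrite hx ?gmulr0 //; rewrite -e -[X in (X < _)%N]add0n ltn_add2r lt0n.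
by apply: contra hi => /eqP hi0; apply/eqP/val_inj.
Qed.

Lemma hmul_right (y v : HH) (L : 'I_n.+1) :
  (forall k : 'I_n.+1, (k < L)%N -> y k = 0) ->
  (forall k : 'I_n.+1, (k < L)%N -> hmul y v k = 0) /\
  hmul y v L = gmul (y L) (v ord0).
Proof.
move=> hy; split.
  move=> k hk; rewrite ffunE big1 // => i _; rewrite big1 // => j _.
  case: eqP => // e; rewrite hy ?gtwist0 ?gmul0r //.
  by apply: leq_ltn_trans hk; rewrite -e leq_addr.
rewrite ffunE (bigD1 L) //= [X in _ + X]big1 ?addr0.
  rewrite (bigD1 ord0) //= ?addn0 eqxx gtwist_0 [X in _ + X]big1 ?addr0 // => j hj.
  case: eqP => // e; exfalso; apply: (negP hj); apply/eqP/val_inj => /=.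
  by apply/eqP; rewrite -(eqn_add2l L) addn0 e.
move=> i hi; rewrite big1 // => j _; case: eqP => // e.
rewrite hy ?gtwist0 ?gmul0r //.
have : (i <= L)%N by rewrite -e leq_addr.
by rewrite leq_eqVlt => /orP [/eqP/val_inj/eqP|//]; rewrite (negbTE hi).
Qed.

Lemma ideal_low (X Y : HH) (L : 'I_n.+1) :
  (forall k : 'I_n.+1, (k < L)%N -> X k = 0) ->
  ideal_gen hmul X Y ->
  (forall k : 'I_n.+1, (k < L)%N -> Y k = 0) /\ ideal_gen (@gmul F gT) (X L) (Y L).
Proof.
move=> hX [s ->]; split.
  move=> k hk; rewrite sum_ffunE big1 // => p _.
  have [h1 _] := hmul_left p.1 hX.
  by have [h3 _] := hmul_right p.2 h1; apply: h3.
exists (map (fun p : HH * HH => (gtwist chi L (p.1 ord0), p.2 ord0)) s).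
rewrite sum_ffunE big_map; apply: eq_bigr => p _ /=.
have [h1 h2] := hmul_left p.1 hX.
by have [_ ->] := hmul_right p.2 h1; rewrite h2.
Qed.

Hypothesis chi1 : chi 1%g = 1.
Definition eH : HH := zmon n.+1 0 (gbasis F (1%g : gT)).

Lemma gtwist_b j : gtwist chi j (gbasis F (1%g : gT)) = gbasis F (1%g : gT).
Proof.
apply/ffunP => s; rewrite !ffunE; case: eqP => [->|_]; last by rewrite mulr0.
by rewrite chi1 expr1n invr1 mulr1.
Qed.

Lemma gmul1 (b : galg F gT) : gmul (gbasis F (1%g : gT)) b = b.
Proof.
apply/ffunP => u; rewrite ffunE (bigD1 1%g) //= [X in _ + X]big1 ?addr0.
  by rewrite ffunE eqxx invg1 mul1g mul1r.
by move=> s hs; rewrite ffunE (negbTE hs) mul0r.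
Qed.

Lemma gmulr1 (b : galg F gT) : gmul b (gbasis F (1%g : gT)) = b.
Proof.
apply/ffunP => u; rewrite ffunE (bigD1 u) //= [X in _ + X]big1 ?addr0.
  by rewrite ffunE mulVg eqxx mulr1.
by move=> s hs; rewrite ffunE -eq_mulVg1 (negbTE hs) mulr0.
Qed.

Lemma hmul1 (X : HH) : hmul eH X = X.
Proof.
apply/ffunP => k; rewrite ffunE (bigD1 ord0) //= [X in _ + X]big1 ?addr0.
  rewrite (bigD1 k) //= ?add0n eqxx ffunE /= gtwist_b gmul1 [X in _ + X]big1 ?addr0 // => j hj.
  by rewrite ?add0n; case: eqP => // /val_inj e; rewrite e eqxx in hj.
move=> i hi; rewrite big1 // => j _; case: eqP => // _.
rewrite ffunE; have -> : (val i == 0%N) = false.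
  by apply/negbTE; apply: contra hi => /eqP hi0; apply/eqP/val_inj.
by rewrite gtwist0 gmul0r.
Qed.

Lemma hmulr1 (X : HH) : hmul X eH = X.
Proof.
apply/ffunP => k; rewrite ffunE (bigD1 k) //= [X in _ + X]big1 ?addr0.
  rewrite (bigD1 ord0) //= ?addn0 eqxx ffunE /= gtwist_0 gmulr1 [X in _ + X]big1 ?addr0 // => j hj.
  case: eqP => // e; exfalso; apply: (negP hj); apply/eqP/val_inj => /=.
  by apply/eqP; rewrite -(eqn_add2l k) addn0 e.
move=> i hi; rewrite big1 // => j _; case: eqP => // e.
rewrite ffunE; case: eqP => [j0|_]; last by rewrite gmulr0.
exfalso; apply: (negP hi); apply/eqP/val_inj; by rewrite /= -e j0 addn0.
Qed.

Lemma ideal_self (X : HH) : ideal_gen hmul X X.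
Proof. by exists [:: (eH, eH)]; rewrite big_cons big_nil addr0 /= hmul1 hmulr1. Qed.

End H.

Lemma lmin (t : nat) (l : 'I_t.+1 -> nat)
  (hl_dec : forall i j : 'I_t.+1, (i < j)%N -> (l j < l i)%N) (i : 'I_t.+1) :
  i != ord_max -> (l ord_max < l i)%N.
Proof.
move=> hi; apply: hl_dec => /=; rewrite ltn_neqAle -ltnS ltn_ord andbT.
by apply: contra hi => /eqP e; apply/eqP/val_inj.
Qed.

Lemma Xcomp (F : fieldType) (gT : finGroupType) (n t : nat)
  (l : 'I_t.+1 -> nat) (h : 'I_t.+1 -> galg F gT)
  (hl_dec : forall i j : 'I_t.+1, (i < j)%N -> (l j < l i)%N) :
  (forall k : 'I_n, (k < l ord_max)%N -> (\sum_(i < t.+1) zmon n (l i) (h i)) k = 0) /\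
  (forall k : 'I_n, val k = l ord_max -> (\sum_(i < t.+1) zmon n (l i) (h i)) k = h ord_max).
Proof.
split.
  move=> k hk; rewrite sum_ffunE big1 // => i _; rewrite ffunE.
  case: eqP => // e; exfalso.
  case: (i =P ord_max) => [ei|ni]; first by rewrite e ei ltnn in hk.
  have := lmin hl_dec (introN eqP ni); rewrite -e => /(ltn_trans hk); by rewrite ltnn.
move=> k hk; rewrite sum_ffunE (bigD1 ord_max) //= ffunE hk eqxx [X in _ + X]big1 ?addr0 //.
move=> i hi; rewrite ffunE hk; case: eqP => // e; exfalso.
by have := lmin hl_dec hi; rewrite e ltnn.
Qed.

Theorem proposition3p5 (F : closedFieldType) (gT : finGroupType)
  (chi : gT -> F) (g : gT) (n : nat)
  (charF : [pchar F] =i pred0)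
  (hchi : linear_char chi)
  (hg : forall s : gT, commute g s)
  (hn2 : (2 <= n)%N)
  (hn : n.-primitive_root (chi g))
  (t r : nat)
  (l : 'I_t.+1 -> nat) (h : 'I_t.+1 -> galg F gT)
  (m : 'I_r.+1 -> nat) (a : 'I_r.+1 -> galg F gT)
  (hl_lt : forall i, (l i < n)%N)
  (hl_dec : forall i j : 'I_t.+1, (i < j)%N -> (l j < l i)%N)
  (hm_lt : forall i, (m i < n)%N)
  (hm_dec : forall i j : 'I_r.+1, (i < j)%N -> (m j < m i)%N)
  (hh : h ord_max != 0) (ha : a ord_max != 0)
  (hideal : forall x : Halg F gT n,
     ideal_gen (Hmul chi (n:=n)) (\sum_(i < t.+1) zmon n (l i) (h i)) x <->
     ideal_gen (Hmul chi (n:=n)) (\sum_(j < r.+1) zmon n (m j) (a j)) x) :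
  l ord_max = m ord_max /\
  (forall y : galg F gT,
     ideal_gen (@gmul F gT) (h ord_max) y <-> ideal_gen (@gmul F gT) (a ord_max) y).
Proof.
have chi1 : chi 1%g = 1.
  have := hchi.1 1%g 1%g; rewrite mulg1 => e.
  by apply: (mulfI (hchi.2 1%g)); rewrite -e mulr1.
case: n hl_lt hm_lt hideal {hn2 hn} => [|n] hl_lt hm_lt hideal.
  by have := hl_lt ord_max.
set X := \sum_(i < t.+1) zmon n.+1 (l i) (h i) in hideal.
set A := \sum_(j < r.+1) zmon n.+1 (m j) (a j) in hideal.
have [Xlo Xeq] := Xcomp n.+1 h hl_dec.
have [Alo Aeq] := Xcomp n.+1 a hm_dec.
rewrite -/X in Xlo Xeq; rewrite -/A in Alo Aeq.
pose Lx : 'I_n.+1 := Ordinal (hl_lt ord_max).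
pose La : 'I_n.+1 := Ordinal (hm_lt ord_max).
have AinX : ideal_gen (Hmul chi (n:=n.+1)) X A by apply/hideal; apply: ideal_self.
have XinA : ideal_gen (Hmul chi (n:=n.+1)) A X by apply/hideal; apply: ideal_self.
have [A1 A2] := ideal_low (L:=Lx) Xlo AinX.
have [X1 X2] := ideal_low (L:=La) Alo XinA.
have eL : l ord_max = m ord_max.
  apply/eqP; rewrite eqn_leq; apply/andP; split; rewrite leqNgt; apply/negP => lt.
    by move: ha; rewrite -(Aeq La) // (A1 La lt) eqxx.
  by move: hh; rewrite -(Xeq Lx) // (X1 Lx lt) eqxx.
have eLL : Lx = La by apply: val_inj; rewrite /= eL.
rewrite -eLL in X2.
rewrite (Xeq Lx) // (Aeq Lx) // in A2.
rewrite (Xeq Lx) // (Aeq Lx) // in X2.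
split => // y; split => hy.
  exact: ideal_trans hy X2.
exact: ideal_trans hy A2.
Qed.
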